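(* Let $X$ be a real Hilbert space of dimension $d$ with unit ball $\mathcal B$, $V\subseteq X$ a subspace, $\Omega\subseteq X$ a symmetric convex set, and $R>0$, and suppose $\mathcal B/V\subseteq R(\Omega\cap\mathcal B)/V$. Then there is a linear map $T:X\to X$ with $\|T\|_{op}\le dR$ such that for all $x\in X$: $x-Tx\in V$ and $Tx\in dR|x|(\Omega\cap\mathcal B)$.
   Context: For $A\subseteq X$, $A/V=\{a+V:a\in A\}\subseteq X/V$; thus $\mathcal B/V\subseteq R(\Omega\cap\mathcal B)/V$ means every $b\in\mathcal B$ differs from some element of $R(\Omega\cap\mathcal B)$ by an element of $V$. *)

(* Defs.v *)
(* A d-dimensional real Hilbert space is modelled as the
   row-vector space 'rV[R]_d with the standard (Euclidean) inner product,
   over an arbitrary R : realType. *)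
From HB Require Import structures.
From mathcomp Require Import all_boot all_order all_algebra.
From mathcomp Require Import reals.
Set Implicit Arguments. Unset Strict Implicit. Unset Printing Implicit Defensive.
Import Order.TTheory GRing.Theory Num.Theory.
Local Open Scope ring_scope.

Definition dotv (R : realType) (d : nat) (x y : 'rV[R]_d) : R :=
  \sum_(i < d) x 0 i * y 0 i.

Definition hnorm (R : realType) (d : nat) (x : 'rV[R]_d) : R :=
  Num.sqrt (dotv x x).

Definition unit_ball (R : realType) (d : nat) : 'rV[R]_d -> Prop :=
  fun x => hnorm x <= 1.

Definition symmetric_set (R : realType) (d : nat) (O : 'rV[R]_d -> Prop) :=
  forall x, O x -> O (- x).

Definition convex_set (R : realType) (d : nat) (O : 'rV[R]_d -> Prop) :=
  forall x y (t : R), O x -> O y -> 0 <= t -> t <= 1 ->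
    O (t *: x + (1 - t) *: y).

(* Main.v *)
Require Import Defs.
From HB Require Import structures.
From mathcomp Require Import all_boot all_order all_algebra.
From mathcomp Require Import reals.
From mathcomp Require Import ring lra.
From Stdlib Require Import ClassicalEpsilon.
Import Order.TTheory GRing.Theory Num.Theory.
Local Open Scope ring_scope.
Set Implicit Arguments. Unset Strict Implicit.

Lemma dotvC (R : realType) (d : nat) (x y : 'rV[R]_d) : dotv x y = dotv y x.
Proof. by rewrite /dotv; apply: eq_bigr => i _; rewrite mulrC. Qed.

Lemma dotvDl (R : realType) (d : nat) (x y z : 'rV[R]_d) :
  dotv (x + y) z = dotv x z + dotv y z.
Proof. by rewrite /dotv -big_split; apply: eq_bigr => i _; rewrite mxE mulrDl. Qed.

Lemma dotvZl (R : realType) (d : nat) (c : R) (x y : 'rV[R]_d) :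
  dotv (c *: x) y = c * dotv x y.
Proof. by rewrite /dotv mulr_sumr; apply: eq_bigr => i _; rewrite mxE mulrA. Qed.

Lemma dotvNl (R : realType) (d : nat) (x y : 'rV[R]_d) :
  dotv (- x) y = - dotv x y.
Proof. by rewrite -scaleN1r dotvZl mulN1r. Qed.

Lemma dotvDr (R : realType) (d : nat) (x y z : 'rV[R]_d) :
  dotv z (x + y) = dotv z x + dotv z y.
Proof. by rewrite dotvC dotvDl !(dotvC z). Qed.

Lemma dotvZr (R : realType) (d : nat) (c : R) (x y : 'rV[R]_d) :
  dotv y (c *: x) = c * dotv y x.
Proof. by rewrite dotvC dotvZl dotvC. Qed.

Lemma dotvNr (R : realType) (d : nat) (x y : 'rV[R]_d) :
  dotv y (- x) = - dotv y x.
Proof. by rewrite dotvC dotvNl dotvC. Qed.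

Lemma dotv0l (R : realType) (d : nat) (y : 'rV[R]_d) : dotv 0 y = 0.
Proof. by rewrite /dotv big1 // => i _; rewrite mxE mul0r. Qed.

Lemma dotv_ge0 (R : realType) (d : nat) (x : 'rV[R]_d) : 0 <= dotv x x.
Proof. by apply: sumr_ge0 => i _; rewrite -expr2 sqr_ge0. Qed.

Lemma dotv_eq0 (R : realType) (d : nat) (x : 'rV[R]_d) : dotv x x = 0 -> x = 0.
Proof.
move/eqP; rewrite psumr_eq0 => [/allP H|i _]; last by rewrite -expr2 sqr_ge0.
apply/rowP => i; rewrite mxE; have := H i (mem_index_enum i).
by rewrite /= mulf_eq0 orbb => /eqP.
Qed.

Lemma hnorm_ge0 (R : realType) (d : nat) (x : 'rV[R]_d) : 0 <= hnorm x.
Proof. exact: sqrtr_ge0. Qed.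

Lemma hnorm_sq (R : realType) (d : nat) (x : 'rV[R]_d) : hnorm x ^+ 2 = dotv x x.
Proof. by rewrite /hnorm sqr_sqrtr // dotv_ge0. Qed.

Lemma hnormZ (R : realType) (d : nat) (c : R) (x : 'rV[R]_d) :
  hnorm (c *: x) = `|c| * hnorm x.
Proof.
by rewrite /hnorm dotvZl dotvZr mulrA -expr2 sqrtrM ?sqr_ge0 // sqrtr_sqr.
Qed.

Lemma hnorm0 (R : realType) (d : nat) : hnorm (0 : 'rV[R]_d) = 0.
Proof.
have -> : (0 : 'rV[R]_d) = 0 *: 0 by rewrite scale0r.
by rewrite hnormZ normr0 mul0r.
Qed.

Lemma hnormN (R : realType) (d : nat) (x : 'rV[R]_d) : hnorm (- x) = hnorm x.
Proof. by rewrite -scaleN1r hnormZ normrN normr1 mul1r. Qed.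

Lemma hnorm_eq0 (R : realType) (d : nat) (x : 'rV[R]_d) : hnorm x = 0 -> x = 0.
Proof. by move=> h; apply: dotv_eq0; rewrite -hnorm_sq h expr2 mul0r. Qed.

Lemma CS (R : realType) (d : nat) (x y : 'rV[R]_d) :
  dotv x y <= hnorm x * hnorm y.
Proof.
have h := dotv_ge0 (hnorm y *: x - hnorm x *: y).
rewrite dotvDl !dotvDr !dotvNl !dotvNr !dotvZl !dotvZr (dotvC y x)
  -(hnorm_sq x) -(hnorm_sq y) in h.
have h2 : 0 <= hnorm x * hnorm y * (hnorm x * hnorm y - dotv x y) by nra.
have [a0|] := eqVneq (hnorm x) 0.
  by rewrite (hnorm_eq0 a0) dotv0l hnorm0 mul0r.
have [b0|] := eqVneq (hnorm y) 0.
  by rewrite (hnorm_eq0 b0) dotvC dotv0l hnorm0 mulr0.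
move=> nb na.
have ab : 0 < hnorm x * hnorm y.
  by rewrite mulr_gt0 // lt_def ?na ?nb hnorm_ge0.
by move: h2; rewrite pmulr_rge0 // subr_ge0.
Qed.

Lemma hnormD (R : realType) (d : nat) (x y : 'rV[R]_d) :
  hnorm (x + y) <= hnorm x + hnorm y.
Proof.
rewrite -(ger0_norm (addr_ge0 (hnorm_ge0 x) (hnorm_ge0 y))) -sqrtr_sqr.
apply: ler_wsqrtr.
rewrite dotvDl !dotvDr (dotvC y x) -(hnorm_sq x) -(hnorm_sq y).
have := CS x y; nra.
Qed.

Lemma coord_le (R : realType) (d : nat) (x : 'rV[R]_d) (i : 'I_d) :
  `|x 0 i| <= hnorm x.
Proof.
rewrite -sqrtr_sqr; apply: ler_wsqrtr.
rewrite /dotv (bigD1 i) //= -expr2 lerDl.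
by apply: sumr_ge0 => j _; rewrite -expr2 sqr_ge0.
Qed.

Lemma conv_sum (R : realType) (d : nat) (S : 'rV[R]_d -> Prop) (I : Type)
  (r : seq I) (a : I -> R) (p : I -> 'rV[R]_d) :
  S 0 -> symmetric_set S -> convex_set S -> (forall i, S (p i)) ->
  exists q, S q /\ \sum_(i <- r) a i *: p i = (\sum_(i <- r) `|a i|) *: q.
Proof.
move=> S0 Ssym Sconv Sp.
elim: r => [|i r [q [Sq IH]]].
  by exists 0; rewrite !big_nil scaler0.
rewrite !big_cons IH.
set t := `|a i|; set s := \sum_(j <- r) `|a j|.
have [p' [Sp' ep']] : exists p', S p' /\ a i *: p i = t *: p'.
  case: (lerP 0 (a i)) => ha.
    by exists (p i); split => //; rewrite /t ger0_norm.
  exists (- p i); split; first exact: Ssym.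
  by rewrite /t ltr0_norm // scaleNr scalerN opprK.
have t0 : 0 <= t by exact: normr_ge0.
have s0 : 0 <= s by apply: sumr_ge0 => j _; exact: normr_ge0.
rewrite ep'.
have [ts0|tsn0] := eqVneq (t + s) 0.
  move: ts0 => /eqP; rewrite paddr_eq0 // => /andP[/eqP te /eqP se].
  exists q; split => //; rewrite te se addr0; have z : forall v : 'rV[R]_d, (0:R) *: v = 0 := fun v => scale0r v; by rewrite !z addr0.
have tsp : 0 < t + s by rewrite lt_def tsn0 addr_ge0.
exists ((t / (t + s)) *: p' + (1 - t / (t + s)) *: q); split.
  apply: Sconv => //; first by rewrite divr_ge0 // addr_ge0.
  by rewrite ler_pdivrMr // mul1r lerDl.
rewrite scalerDr !scalerA; congr (_ *: _ + _ *: _); field; exact: tsn0.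
Qed.

Unset Implicit Arguments.
Theorem lemma8p3 (R : realType) (d : nat) (V : 'M[R]_d)
    (Omega : 'rV[R]_d -> Prop) (Rad : R) :
  symmetric_set Omega -> convex_set Omega -> 0 < Rad ->
  (* B/V ⊆ R(Ω ∩ B)/V *)
  (forall b : 'rV[R]_d, unit_ball b ->
     exists w : 'rV[R]_d, Omega w /\ unit_ball w /\ (b - Rad *: w <= V)%MS) ->
  exists T : 'M[R]_d,
    (* ||T||_op <= d R *)
    (forall x : 'rV[R]_d, hnorm (x *m T) <= d%:R * Rad * hnorm x) /\
    (forall x : 'rV[R]_d,
       (x - x *m T <= V)%MS /\
       exists w : 'rV[R]_d, Omega w /\ unit_ball w /\
         x *m T = (d%:R * Rad * hnorm x) *: w).
Proof.
move=> Hsym Hconv HR Hsub.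
pose S := fun w => Omega w /\ unit_ball w.
have B0 : unit_ball (0 : 'rV[R]_d) by rewrite /unit_ball hnorm0 ler01.
have S0 : S 0.
  split => //.
  have [w0 [Ow0 _]] := Hsub 0 B0.
  have := Hconv w0 (- w0) (1/2) Ow0 (Hsym _ Ow0).
  have -> : (1 - 1/2 : R) = 1/2 by field.
  rewrite scalerN subrr; apply; first by rewrite divr_ge0.
  by rewrite ler_pdivrMr // mul1r ler1n.
have Ssym : symmetric_set S.
  by move=> x [Ox Bx]; split; [exact: Hsym | rewrite /unit_ball hnormN].
have Sconv : convex_set S.
  move=> x y t [Ox Bx] [Oy By] t0 t1; split; first exact: Hconv.
  rewrite /unit_ball; apply: le_trans (hnormD _ _) _.
  rewrite !hnormZ (ger0_norm t0) (ger0_norm (_ : 0 <= 1 - t)); last by rewrite subr_ge0.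
  move: Bx By; rewrite /unit_ball => Bx By; nra.
have Hch : forall i : 'I_d, exists w, S w /\ (delta_mx 0 i - Rad *: w <= V)%MS.
  move=> i.
  have Hb : unit_ball (delta_mx 0 i : 'rV[R]_d).
    rewrite /unit_ball /hnorm.
    have -> : dotv (delta_mx 0 i : 'rV[R]_d) (delta_mx 0 i) = 1.
      rewrite /dotv (bigD1 i) //= big1 => [|j ji]; first by rewrite !mxE !eqxx mulr1 addr0.
      by rewrite !mxE (negPf ji) andbF mul0r.
    by rewrite sqrtr1.
  have [w [Ow [Bw Hw]]] := Hsub _ Hb.
  by exists w.
pose W := fun i => proj1_sig (constructive_indefinite_description _ (Hch i)).
have HW : forall i, S (W i) /\ (delta_mx 0 i - Rad *: W i <= V)%MS.
  by move=> i; exact: (proj2_sig (constructive_indefinite_description _ (Hch i))).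
pose T := \matrix_(i < d, j < d) (Rad *: W i) 0 j.
have rowT : forall i, row i T = Rad *: W i.
  by move=> i; apply/rowP => j; rewrite !mxE.
have xT : forall x : 'rV[R]_d, x *m T = \sum_i (x 0 i * Rad) *: W i.
  by move=> x; rewrite mulmx_sum_row; apply: eq_bigr => i _; rewrite rowT scalerA.
have c0 : forall x : 'rV[R]_d, 0 <= d%:R * Rad * hnorm x.
  by move=> x; rewrite mulr_ge0 ?hnorm_ge0 // mulr_ge0 // ltW.
have part2 : forall x : 'rV[R]_d,
       (x - x *m T <= V)%MS /\
       exists w : 'rV[R]_d, Omega w /\ unit_ball w /\
         x *m T = (d%:R * Rad * hnorm x) *: w.
  move=> x; split.
    rewrite xT {1}(row_sum_delta x) -sumrB; apply: summx_sub => i _.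
    by rewrite -scalerA -scalerBr; apply: scalemx_sub; exact: (HW i).2.
  have [q [Sq Hq]] := @conv_sum R d S _ (index_enum 'I_d) (fun i => x 0 i * Rad) W
     S0 Ssym Sconv (fun i => (HW i).1).
  set s := \sum_(i <- index_enum _) `|_| in Hq.
  set c := d%:R * Rad * hnorm x.
  have s_le : s <= c.
    apply: le_trans (_ : \sum_(i < d) hnorm x * Rad <= _).
      apply: ler_sum => i _; rewrite normrM (gtr0_norm HR).
      by rewrite ler_wpM2r ?coord_le // ltW.
    by rewrite sumr_const card_ord -mulr_natl /c [hnorm x * Rad]mulrC mulrA.
  have s0 : 0 <= s by apply: sumr_ge0 => i _; exact: normr_ge0.
  have cc0 : 0 <= c by exact: c0.
  exists ((s / c) *: q).
  have [cz|cnz] := eqVneq c 0.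
    have sz : s = 0 by apply/le_anti; rewrite s0 -cz s_le.
    case: S0 => O0 B0'.
    have z : forall v : 'rV[R]_d, (0:R) *: v = 0 := fun v => scale0r v.
    rewrite cz sz mul0r !z; split; first exact: O0.
    split; first exact: B0'.
    by rewrite xT Hq sz !z.

  have cp : 0 < c by rewrite lt_def cnz cc0.
  have Sz : S ((s / c) *: q).
    have := Sconv q 0 (s / c) Sq S0 (divr_ge0 s0 cc0).
    rewrite scaler0 addr0; apply.
    by rewrite ler_pdivrMr // mul1r.
  case: Sz => Sz1 Sz2.
  split; first exact: Sz1.
  split; first exact: Sz2.
  by rewrite xT Hq scalerA mulrC divfK.
exists T; split; last exact: part2.
move=> x; have [_ [w [_ [Bw ->]]]] := part2 x.
by rewrite hnormZ ger0_norm ?c0 // ler_piMr // c0.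
Qed.
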